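(* Let $A$ be a commutative unital $\mathbb K$-algebra, let $B=\mathrm{Diff}^1(A)$, and let $\mu\in L^2(B)$ be the commutator $\mu(u,v)=u\circ v-v\circ u$ of $\mathbb K$-linear endomorphisms of $A$. Then for every $n\ge 1$ and every $\omega\in\Omega^n(A)$, the element $[\mu,\omega]\in L^{n+1}(B)$ belongs to $\Omega^{n+1}(A)$, and $$[\mu,\omega]=-\,d\omega ,$$ i.e. for all $X_1,\dots,X_{n+1}\in \mathrm{Der}^1(A)$, $$[\mu,\omega](X_1,\dots,X_{n+1})=-\Big(\sum_{i=1}^{n+1}(-1)^{i-1}X_i\big(\omega(X_1,\dots,\widehat{X_i},\dots,X_{n+1})\big)+\sum_{i<j}(-1)^{i+j}\omega([X_i,X_j],X_1,\dots,\widehat{X_i},\dots,\widehat{X_j},\dots,X_{n+1})\Big).$$ In particular $\Omega(A)=\bigoplus_{n\ge1}\Omega^n(A)$ is invariant under $\partial_\mu=[\mu,\cdot\,]$.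
   Context: $\mathbb K$ denotes $\mathbb R$ or $\mathbb C$. For a $\mathbb K$-vector space $V$ and $k\ge1$, $L^k(V)$ is the space of $\mathbb K$-multilinear alternating maps $V^k\to V$; $L^0(V)=V$ and $L(V)=\bigoplus_{k\ge0}L^k(V)$. The compositional product of $\alpha\in L^m(V)$ and $\beta\in L^n(V)$ (with $m\ge 1$) is $\alpha\circ\beta\in L^{m+n-1}(V)$, $$(\alpha\circ\beta)(u_1,\dots,u_{m+n-1})=\sum_{s}\operatorname{sgn}(s)\,\alpha\big(\beta(u_{s(1)},\dots,u_{s(n)}),u_{s(n+1)},\dots,u_{s(m+n-1)}\big),$$ the sum running over permutations $s$ of $\{1,\dots,m+n-1\}$ with $s(1)<\dots<s(n)$ and $s(n+1)<\dots<s(m+n-1)$; if $m=0$ one sets $\alpha\circ\beta=0$. The bracket on $L(V)$ is, for $\alpha\in L^m(V)$, $\beta\in L^n(V)$, $$[\alpha,\beta]=(-1)^{(m+1)n}\alpha\circ\beta+(-1)^m\beta\circ\alpha .$$ For a commutative unital $\mathbb K$-algebra $A$: $\mathrm{Der}^1(A)$ is the space of $\mathbb K$-linear derivations of $A$; $A$ is identified with the multiplication operators $b\mapsto ab$ inside $\mathrm{End}_{\mathbb K}(A)$; $\mathrm{Diff}^1(A)$ is the set of $\varphi\in\mathrm{End}_{\mathbb K}(A)$ such that the commutator $\varphi\circ a-a\circ\varphi$ is a multiplication operator for every $a\in A$; one has $\mathrm{Diff}^1(A)=\mathrm{Der}^1(A)\oplus A$ via $\varphi=(\varphi-\varphi(1))+\varphi(1)$.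 For $n\ge1$, $\Omega^n(A)\subset L^n(\mathrm{Diff}^1(A))$ is the set of $\omega$ such that: (i) $\omega$ takes values in $A\subset \mathrm{Diff}^1(A)$; (ii) $\omega(u_1,\dots,u_n)=0$ whenever some $u_i$ lies in $A$; (iii) $\omega(au_1,u_2,\dots,u_n)=a\,\omega(u_1,\dots,u_n)$ for $a\in A$ and $u_1,\dots,u_n\in\mathrm{Der}^1(A)$. Such an $\omega$ is determined by its values on $\mathrm{Der}^1(A)$, and $d\omega$ denotes the element of $\Omega^{n+1}(A)$ given on derivations by the usual formula displayed in the claim (with $[X_i,X_j]$ the commutator of derivations). *)

(* Defs.v *)
From HB Require Import structures.
From mathcomp Require Import all_boot all_order all_algebra all_fingroup.
From mathcomp Require Import reals complex.
Set Implicit Arguments. Unset Strict Implicit. Unset Printing Implicit Defensive.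
Import Order.TTheory GRing.Theory Num.Theory.
Local Open Scope ring_scope.

Section Diff.
Variables (K : fieldType) (A : comAlgType K).

(* Elements of End_K(A) are represented as functions A -> A satisfying Klinear. *)
Definition Klinear (f : A -> A) : Prop :=
  forall (k : K) (x y : A), f (k *: x + y) = k *: f x + f y.

Definition mulop (c : A) : A -> A := fun b => c * b.

(* phi is a multiplication operator, i.e. lies in A ⊂ End_K(A) *)
Definition isMult (phi : A -> A) : Prop := exists c : A, phi = mulop c.

Definition isDer (X : A -> A) : Prop :=
  Klinear X /\ forall a b : A, X (a * b) = a * X b + X a * b.

Definition isDiff1 (phi : A -> A) : Prop :=
  Klinear phi /\ forall a : A, isMult (fun b => phi (a * b) - a * phi b).

(* k-ary maps on End_K(A); only their values on Diff^1(A)-tuples matter. *)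
Definition Lmap (k : nat) := ('I_k -> A -> A) -> A -> A.

Definition inL (k : nat) (al : Lmap k) : Prop :=
  (forall u : 'I_k -> A -> A, (forall i, isDiff1 (u i)) -> isDiff1 (al u)) /\
  (forall (u : 'I_k -> A -> A) (i : 'I_k) (x y : A -> A) (c : K),
      (forall j, isDiff1 (u j)) -> isDiff1 x -> isDiff1 y ->
      al (fun j => if j == i then (fun b => c *: x b + y b) else u j)
      = (fun b => c *: al (fun j => if j == i then x else u j) b
                  + al (fun j => if j == i then y else u j) b)) /\
  (forall (u : 'I_k -> A -> A) (i j : 'I_k),
      (forall l, isDiff1 (u l)) -> i != j -> u i = u j -> al u = (fun _ => 0)).

Definition inOmega (n : nat) (om : Lmap n) : Prop :=
  inL om /\
  (forall u : 'I_n -> A -> A, (forall i, isDiff1 (u i)) -> isMult (om u)) /\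
  (forall u : 'I_n -> A -> A, (forall i, isDiff1 (u i)) ->
      (exists i, isMult (u i)) -> om u = (fun _ => 0)) /\
  (forall (u : 'I_n -> A -> A) (a : A), (forall i, isDer (u i)) ->
      forall i0 : 'I_n, val i0 = 0%N ->
      om (fun j => if j == i0 then (fun b => a * u j b) else u j)
      = (fun b => a * om u b)).

Definition ext (p : nat) (u : 'I_p -> A -> A) (k : nat) : A -> A :=
  if insub k is Some i then u i else (fun _ => 0).

(* (s(1)<...<s(n)) and (s(n+1)<...<s(m+n-1)), in 0-based indexing *)
Definition shuffle (p n : nat) (s : 'S_p) : bool :=
  [forall i : 'I_p, forall j : 'I_p,
     ((i < j)%N && ((j < n)%N || (n <= i)%N)) ==> (s i < s j)%N].

Definition comp (m n : nat) (al : Lmap m) (be : Lmap n) : Lmap (m + n).-1 :=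
  fun u => if m is 0 then (fun _ => 0) else
   fun a => \sum_(s : 'S_((m + n).-1) | shuffle n s)
     (-1) ^+ odd_perm s *
       al (fun k : 'I_m =>
             if val k == 0%N then be (fun l : 'I_n => ext (u \o s) l)
             else ext (u \o s) (n + k.-1)) a.

Definition bracket (m n : nat) (al : Lmap m) (be : Lmap n) : Lmap (m + n).-1 :=
  fun u a =>
    (-1) ^+ ((m + 1) * n) * comp al be u a
    + (-1) ^+ m * comp be al (fun k => u (cast_ord (congr1 predn (addnC n m)) k)) a.

Definition mu : Lmap 2 := fun u b => u ord0 (u ord_max b) - u ord_max (u ord0 b).

(* d omega on derivations X_1..X_{n+1} (0-based indices), as an element of A;
   an element of Omega is identified with the element om(..)(1) of A. *)
Definition dOmega (n : nat) (om : Lmap n) (X : 'I_n.+1 -> A -> A) : A :=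
  \sum_(i < n.+1) (-1) ^+ i * X i (om (fun k : 'I_n => X (inord (bump i k))) 1)
  + \sum_(i < n.+1) \sum_(j < n.+1 | (i < j)%N)
      (-1) ^+ (i + j) *
        om (fun k : 'I_n =>
              if val k == 0%N then (fun b => X i (X j b) - X j (X i b))
              else X (inord (bump i (bump j.-1 k.-1)))) 1.

End Diff.

Definition claim (K : fieldType) : Prop :=
  forall (A : comAlgType K) (n : nat) (om : Lmap A n), (1 <= n)%N ->
    inOmega om ->
    inOmega (n := n.+1) (bracket (@mu K A) om) /\
    forall X : 'I_n.+1 -> A -> A, (forall i, isDer (X i)) ->
      bracket (@mu K A) om X = mulop (- dOmega om X).

(* Main.v *)
Require Import Defs.
From HB Require Import structures.
From mathcomp Require Import all_boot all_order all_algebra all_fingroup reals complex.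
From mathcomp Require Import zify ring.
From Stdlib Require Import FunctionalExtensionality.
Set Implicit Arguments. Unset Strict Implicit. Unset Printing Implicit Defensive.
Import Order.TTheory GRing.Theory Num.Theory.

Lemma count_lt M v : (\sum_(y < M) (y < v)%N)%N = minn v M.
Proof.
elim: M => [|M IH]; first by rewrite big_ord0 minn0.
rewrite big_ord_recr /= IH; lia.
Qed.

Lemma count_perm M (s : 'S_M) (x : 'I_M) : (s x : nat) = (\sum_(j < M) (s j < s x)%N)%N.
Proof.
rewrite -(reindex_inj (@perm_inj _ s) (P := xpredT) (F := fun y : 'I_M => nat_of_bool (y < s x)%N)) /=.
rewrite count_lt; have := ltn_ord (s x); lia.
Qed.

Section S1.
Variable N : nat.

Definition c1 (k : 'I_N.+1) : 'S_N.+1 := lift_perm ord_max k 1.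

Lemma c1_max k : c1 k ord_max = k.
Proof. exact: lift_perm_id. Qed.

Lemma c1_val k (x : 'I_N.+1) : (x < N)%N -> val (c1 k x) = bump k x.
Proof.
move=> hx; have -> : x = lift ord_max (Ordinal hx).
  by apply: val_inj; rewrite /= /bump; lia.
rewrite /c1 lift_perm_lift perm1 /= /bump; lia.
Qed.

Lemma c1_valn k (x : 'I_N.+1) : (x < N)%N -> nat_of_ord (c1 k x) = bump k x.
Proof. exact: c1_val. Qed.

Lemma c1_odd k : odd_perm (c1 k) = odd N (+) odd k.
Proof. by rewrite /c1 odd_lift_perm odd_perm1 addbF. Qed.

Lemma c1_shuffle k : shuffle N (c1 k).
Proof.
apply/forallP => i; apply/forallP => j; apply/implyP => /andP[hij /orP[hj|hi]].
  rewrite !c1_val //; first (rewrite /bump; lia); lia.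
have := ltn_ord j; lia.
Qed.

Lemma shuffle1_unique s : shuffle N s -> s = c1 (s ord_max).
Proof.
move=> hs; apply/permP => x; case: (eqVneq x ord_max) => [->|nx]; first by rewrite c1_max.
have hx : (x < N)%N by have := ltn_ord x; move: nx; rewrite -val_eqE /=; lia.
apply: val_inj; rewrite c1_val //.
have hc := count_perm s x; rewrite big_ord_recr /= in hc.
have hsum : (\sum_(i < N) (s (widen_ord (leqnSn N) i) < s x)%N)%N = (\sum_(i < N) (i < x)%N)%N.
  apply: eq_bigr => i _; congr (nat_of_bool _).
  have hi := ltn_ord i.
  case: (ltngtP i x) => hix.
  - by have := forallP (forallP hs (widen_ord (leqnSn N) i)) x; rewrite /= hix hx => /implyP ->.
  - have := forallP (forallP hs x) (widen_ord (leqnSn N) i); rewrite /= hix hi => /implyP h.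
    by apply/negbTE; rewrite -leqNgt ltnW // h.
  - have -> : widen_ord (leqnSn N) i = x by apply: val_inj.
    by rewrite ltnn.
rewrite hsum count_lt in hc.
have hne : (s x : nat) != (s ord_max : nat).
  by rewrite val_eqE (inj_eq (@perm_inj _ s)).
move: hne hc; rewrite /= /bump; set v := (s x : nat); set k := (s ord_max : nat) => /eqP hne.
case: (ltnP k v) => hkv /=; lia.
Qed.

Lemma shuffle1_sum (R : nmodType) (G : 'S_N.+1 -> R) :
  (\sum_(s | shuffle N s) G s = \sum_(k < N.+1) G (c1 k))%R.
Proof.
rewrite (reindex_onto c1 (fun s => s ord_max)) /=; last by move=> s hs; rewrite -shuffle1_unique.
by apply: eq_bigl => k; rewrite c1_shuffle c1_max eqxx.
Qed.
End S1.

Section S2.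
Variable N : nat.

Definition c2 (i j : 'I_N.+2) : 'S_N.+2 :=
  lift_perm ord0 i (lift_perm ord0 (inord j.-1) 1).

Definition ord1' : 'I_N.+2 := lift ord0 ord0.

Lemma c2_0 i j : c2 i j ord0 = i.
Proof. exact: lift_perm_id. Qed.

Lemma c2_val (i j : 'I_N.+2) (x : 'I_N.+2) : (i < j)%N ->
  (c2 i j x : nat) = if (x : nat) == 0%N then (i : nat) else if (x : nat) == 1%N then (j : nat)
                     else bump i (bump j.-1 (x - 2)).
Proof.
move=> hij; have hj := ltn_ord j.
case: (eqVneq (x : nat) 0%N) => [hx0|hx0].
  have -> : x = ord0 by apply: val_inj; rewrite /= hx0.
  by rewrite c2_0.
have hx1 : (x.-1 < N.+1)%N by have := ltn_ord x; lia.
have -> : x = lift ord0 (Ordinal hx1) by apply: val_inj; rewrite /= /bump; lia.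
rewrite /c2 lift_perm_lift /=.
case: (eqVneq x.-1 0%N) => [hy0|hy0].
  have -> : Ordinal hx1 = ord0 by apply: val_inj.
  rewrite lift_perm_id /= inordK; last by lia.
  rewrite /bump; case: ifP => /eqP ?; lia.
have hx2 : (x.-2 < N)%N by have := ltn_ord x; lia.
have -> : Ordinal hx1 = lift ord0 (Ordinal hx2) by apply: val_inj; rewrite /= /bump; lia.
rewrite lift_perm_lift perm1 /= inordK; last by lia.
rewrite /bump; case: ifP => /eqP ?; lia.
Qed.

Lemma c2_odd (i j : 'I_N.+2) : (0 < j)%N -> odd_perm (c2 i j) = odd i (+) odd j.-1.
Proof.
move=> hj; rewrite /c2 odd_lift_perm odd_lift_perm odd_perm1 inordK; last by have := ltn_ord j; lia.
by rewrite /= addbF.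
Qed.

Lemma c2_shuffle (i j : 'I_N.+2) : (i < j)%N -> shuffle 2 (c2 i j).
Proof.
move=> hij; apply/forallP => a; apply/forallP => b; apply/implyP => /andP[hab /orP[hb|ha]].
  rewrite !c2_val //; have -> : (a : nat) = 0%N by lia.
  have -> : (b : nat) = 1%N by lia.
  by [].
rewrite !c2_val //; have ha0 : (a : nat) != 0%N by apply/eqP; lia.
have ha1 : (a : nat) != 1%N by apply/eqP; lia.
have hb0 : (b : nat) != 0%N by apply/eqP; lia.
have hb1 : (b : nat) != 1%N by apply/eqP; lia.
rewrite (negbTE ha0) (negbTE ha1) (negbTE hb0) (negbTE hb1) /bump; lia.
Qed.

Lemma shuffle2_lt s : shuffle 2 s -> (s ord0 < s ord1')%N.
Proof. by move=> hs; have /implyP h := forallP (forallP hs ord0) ord1'; apply: h. Qed.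

Lemma shuffle2_unique s : shuffle 2 s -> s = c2 (s ord0) (s ord1').
Proof.
move=> hs; have h01 := shuffle2_lt hs.
apply/permP => x; apply: val_inj; rewrite /= c2_val //.
case: (eqVneq (x : nat) 0%N) => [hx0|hx0].
  by have -> : x = ord0 by apply: val_inj.
case: (eqVneq (x : nat) 1%N) => [hx1|hx1].
  by have -> : x = ord1' by apply: val_inj; rewrite /= /bump.
have hc := count_perm s x; rewrite !big_ord_recl /= in hc.
have hsum : (\sum_(i < N) (s (lift ord0 (lift ord0 i)) < s x)%N)%N = (\sum_(i < N) (i < x - 2)%N)%N.
  apply: eq_bigr => i _; congr (nat_of_bool _).
  have hi := ltn_ord i.
  have hb : bump 0 (bump 0 i) = i.+2 by rewrite /bump; lia.
  have hli : (lift ord0 (lift ord0 i) : nat) = i.+2 by rewrite /= hb.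
  case: (ltngtP i.+2 x) => hix.
  - have := forallP (forallP hs (lift ord0 (lift ord0 i))) x; rewrite /= hb hix /=.
    move/implyP => h; rewrite h; first by apply/esym; lia.
    by apply/orP; right; lia.
  - have := forallP (forallP hs x) (lift ord0 (lift ord0 i)); rewrite /= hb hix.
    rewrite (_ : (1 < x)%N = true) ?orbT /=; last by lia.
    move=> h; rewrite ltnNge (ltnW h) /=; apply/esym/negbTE; rewrite -leqNgt; lia.
  - have -> : lift ord0 (lift ord0 i) = x by apply: val_inj; rewrite /= hb.
    rewrite ltnn; apply/esym/negbTE; rewrite -leqNgt; lia.
rewrite hsum count_lt in hc.
have hne0 : (s x : nat) != (s ord0 : nat).
  by rewrite val_eqE (inj_eq (@perm_inj _ s)) -val_eqE /=.
have hne1 : (s x : nat) != (s ord1' : nat).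
  by rewrite val_eqE (inj_eq (@perm_inj _ s)) -val_eqE /=.
idtac.
move: hne0 hne1 hc h01; rewrite /= /bump.
set v := (s x : nat); set i := (s ord0 : nat); set j := (s ord1' : nat) => /eqP hn0 /eqP hn1.
have := ltn_ord x.
case: (ltnP i v) => hiv; case: (ltnP j v) => hjv /=; lia.
Qed.

Lemma shuffle2_sum (R : nmodType) (G : 'S_N.+2 -> R) :
  (\sum_(s | shuffle 2 s) G s = \sum_(i < N.+2) \sum_(j < N.+2 | (i < j)%N) G (c2 i j))%R.
Proof.
rewrite pair_big_dep /=.
rewrite (reindex_onto (fun p : 'I_N.+2 * 'I_N.+2 => c2 p.1 p.2) (fun s => (s ord0, s ord1'))) /=;
  last by move=> s hs; rewrite -shuffle2_unique.
apply: eq_bigl => -[i j] /=; rewrite c2_0.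
apply/idP/idP.
  case/andP=> hs /eqP [e].
  by have := shuffle2_lt hs; rewrite c2_0 e.
move=> hij; rewrite c2_shuffle //=.
have -> : c2 i j ord1' = j by apply: val_inj; rewrite /= c2_val.
by rewrite eqxx.
Qed.
End S2.

Local Open Scope ring_scope.

Section Work.
Variables (K : fieldType) (A : comAlgType K).
Local Notation F := (A -> A).
Local Notation D := (@isDiff1 K A).

Lemma Klin_add (f : F) : Klinear f -> forall x y, f (x + y) = f x + f y.
Proof. by move=> hf x y; have := hf 1 x y; rewrite !scale1r. Qed.

Lemma Klin0 (f : F) : Klinear f -> f 0 = 0.
Proof.
move=> hf; have := Klin_add hf 0 0; rewrite addr0 => h.
have : f 0 + f 0 - f 0 = f 0 - f 0 by rewrite -h.
by rewrite addrK subrr.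
Qed.

Lemma KlinZ (f : F) : Klinear f -> forall k x, f (k *: x) = k *: f x.
Proof. by move=> hf k x; have := hf k x 0; rewrite addr0 Klin0 // addr0. Qed.

Lemma KlinN (f : F) : Klinear f -> forall x, f (- x) = - f x.
Proof. by move=> hf x; rewrite -scaleN1r KlinZ // scaleN1r. Qed.

Lemma KlinB (f : F) : Klinear f -> forall x y, f (x - y) = f x - f y.
Proof. by move=> hf x y; rewrite Klin_add // KlinN. Qed.

Lemma Klin_mul (f : F) : Klinear f -> forall (k : K) x, f (k%:A * x) = k%:A * f x.
Proof. by move=> hf k x; rewrite -!scalerAl !mul1r KlinZ. Qed.

Definition dl (phi : F) (a : A) : A := phi a - a * phi 1.
Definition com (phi psi : F) : F := fun b => phi (psi b) - psi (phi b).

Lemma DiffE (phi : F) : D phi -> forall a b, phi (a * b) = a * phi b + dl phi a * b.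
Proof.
case=> _ h a b; case: (h a) => c hc.
have h1 := congr1 (fun g => g 1) hc; have hb := congr1 (fun g => g b) hc.
rewrite /= /mulop mulr1 in h1 hb.
by rewrite /dl h1 mulr1 -hb addrC subrK.
Qed.

Lemma DiffI (phi : F) : Klinear phi ->
  (forall a b, phi (a * b) = a * phi b + dl phi a * b) -> D phi.
Proof.
move=> hl h; split=> // a; exists (dl phi a); apply: functional_extensionality => b.
by rewrite /mulop h addrC addKr.
Qed.

Lemma DiffK (phi : F) : D phi -> Klinear phi.
Proof. by case. Qed.

Lemma Der1 (X : F) : isDer X -> X 1 = 0.
Proof.
case=> _ h; have := h 1 1; rewrite !mul1r mulr1 => e.
have : X 1 + X 1 - X 1 = X 1 - X 1 by rewrite -e.
by rewrite addrK subrr.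
Qed.

Lemma DerD (X : F) : isDer X -> D X.
Proof.
move=> hX; have [hl h] := hX; apply: DiffI => // a b.
by rewrite h /dl Der1 // mulr0 subr0.
Qed.

Lemma dl_der (X : F) a : isDer X -> dl X a = X a.
Proof. by move=> hX; rewrite /dl Der1 // mulr0 subr0. Qed.

Lemma D_mulop c : D (mulop c).
Proof.
apply: DiffI => [k x y|a b]; rewrite /mulop /dl.
  by rewrite mulrDr scalerAr.
rewrite mulr1; ring.
Qed.
Lemma D_comb (k : K) (x y : F) : D x -> D y -> D (fun b => k *: x b + y b).
Proof.
move=> hx hy; apply: DiffI => [c u v|a b]; rewrite /dl.
  by rewrite (DiffK hx) (DiffK hy) !scalerDr !scalerA [k * c]mulrC addrACA.
rewrite (DiffE hx) (DiffE hy) /dl.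
rewrite -[k *: (_ + _)]mulr_algl -[k *: x b]mulr_algl -[k *: x a]mulr_algl -[k *: x 1]mulr_algl; ring.
Qed.
Lemma D_com (p q : F) : D p -> D q -> D (com p q).
Proof.
move=> hp hq; have lp := DiffK hp; have lq := DiffK hq.
apply: DiffI => [c u v|a b]; rewrite /com /dl.
  rewrite (lq c u v) (lp c u v) lp lq scalerBr.
  set x1 := c *: p (q u); set x2 := c *: q (p u); ring.
rewrite (DiffE hq a b) (DiffE hp a b) !(Klin_add lp) !(Klin_add lq).
rewrite !(DiffE hp) !(DiffE hq) /dl !(Klin_add lp) !(Klin_add lq) !(KlinN lp) !(KlinN lq).
rewrite !(DiffE hp) !(DiffE hq) /dl; ring.
Qed.

Lemma Der_mul (a : A) (X : F) : isDer X -> isDer (fun b => a * X b).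
Proof.
case=> hl h; split=> [k x y|x y]; first by rewrite hl mulrDr scalerAr.
by rewrite h; ring.
Qed.

Lemma Der_com (X Y : F) : isDer X -> isDer Y -> isDer (com X Y).
Proof.
move=> hX hY; have [lX dX] := hX; have [lY dY] := hY.
have dc := D_com (DerD hX) (DerD hY); split; first by case: dc.
move=> a b; rewrite (DiffE dc) /dl /com !Der1 // (Klin0 lX) (Klin0 lY); ring.
Qed.

Lemma com_mulopl c (q : F) : D q -> isMult (com (mulop c) q).
Proof.
move=> hq; exists (- dl q c); apply: functional_extensionality => b.
by rewrite /com /mulop (DiffE hq); ring.
Qed.

Lemma com_mulopr c (q : F) : D q -> isMult (com q (mulop c)).
Proof.
move=> hq; exists (dl q c); apply: functional_extensionality => b.
by rewrite /com /mulop (DiffE hq); ring.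
Qed.

Lemma D0 : D (fun _ => 0).
Proof. have -> : (fun _ : A => 0 : A) = mulop 0 by apply: functional_extensionality => b; rewrite /mulop mul0r. exact: D_mulop. Qed.

Lemma isMult0 : isMult (fun _ : A => 0 : A).
Proof. by exists 0; apply: functional_extensionality => b; rewrite /mulop mul0r. Qed.

Definition upd (U : nat -> F) (p : nat) (v : F) : nat -> F :=
  fun m => if m == p then v else U m.
Definition good (r : nat) (U : nat -> F) := forall m, (m < r)%N -> D (U m).
Definition swap (U : nat -> F) (p q : nat) : nat -> F :=
  fun m => if m == p then U q else if m == q then U p else U m.
Definition lc (c : K) (x y : F) : F := fun b => c *: x b + y b.

Lemma upd_id U p : upd U p (U p) = U.
Proof. by apply: functional_extensionality => m; rewrite /upd; case: eqP => // ->. Qed.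

Lemma upd_updC U p q v w : p != q -> upd (upd U p v) q w = upd (upd U q w) p v.
Proof.
move=> npq; apply: functional_extensionality => m; rewrite /upd.
case: (eqVneq m q) => [->|_]; first by rewrite ?eqxx [q == p]eq_sym (negbTE npq) ?eqxx.
by case: (m == p).
Qed.

Lemma upd_upd U p v w : upd (upd U p v) p w = upd U p w.
Proof. by apply: functional_extensionality => m; rewrite /upd; case: eqP. Qed.

Lemma good_upd r U p v : good r U -> D v -> good r (upd U p v).
Proof. by move=> hU hv m hm; rewrite /upd; case: eqP => // _; apply: hU. Qed.

Lemma good_swap r U p q : good r U -> (p < r)%N -> (q < r)%N -> good r (swap U p q).
Proof.
by move=> hU hp hq m hm; rewrite /swap; case: eqP => _; [apply: hU|case: eqP => _; apply: hU].
Qed.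

Lemma D_lc c x y : D x -> D y -> D (lc c x y).
Proof. exact: D_comb. Qed.

Definition mlin (r : nat) (G : (nat -> F) -> A) :=
  forall U p c x y, good r U -> (p < r)%N -> D x -> D y ->
    G (upd U p (lc c x y)) = c *: G (upd U p x) + G (upd U p y).

Lemma swap_lemma r G p q : mlin r G -> (p < r)%N -> (q < r)%N -> p != q ->
  (forall W, good r W -> W p = W q -> G W = 0) ->
  forall U, good r U -> G (swap U p q) = - G U.
Proof.
move=> hG hp hq npq hz U hU.
set x := U p; set y := U q.
have Dx : D x by apply: hU. have Dy : D y by apply: hU.
have Ds : D (lc 1 x y) by apply: D_lc.
have h0 : G (upd (upd U p (lc 1 x y)) q (lc 1 x y)) = 0.
  by apply: hz; [apply: good_upd => //; apply: good_upd|rewrite /upd !eqxx; case: ifP].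
move: h0; rewrite (hG (upd U p (lc 1 x y)) q 1 x y) ?scale1r //; last by apply: good_upd.
rewrite !(upd_updC _ _ _ npq).
rewrite (hG (upd U q x) p 1 x y) ?scale1r //; last by apply: good_upd.
rewrite (hG (upd U q y) p 1 x y) ?scale1r //; last by apply: good_upd.
rewrite (hz (upd (upd U q x) p x)) ?add0r; first last.
- by rewrite /upd !eqxx; case: ifP.
- by apply: good_upd => //; apply: good_upd.
rewrite (hz (upd (upd U q y) p y)) ?addr0; first last.
- by rewrite /upd !eqxx; case: ifP.
- by apply: good_upd => //; apply: good_upd.
have -> : upd (upd U q x) p y = swap U p q.
  apply: functional_extensionality => m; rewrite /upd /swap.
  by case: eqP => // ->; rewrite (negbTE npq).
have -> : upd (upd U q y) p x = U by rewrite /x /y !upd_id.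
by move/eqP; rewrite addr_eq0 => /eqP.
Qed.

Lemma alt_of_adj r G : mlin r G ->
  (forall W p, good r W -> (p.+1 < r)%N -> W p = W p.+1 -> G W = 0) ->
  forall W p q, good r W -> (p < q)%N -> (q < r)%N -> W p = W q -> G W = 0.
Proof.
move=> hG hadj.
suff H : forall d W p q, q = (p + d.+1)%N -> good r W -> (q < r)%N -> W p = W q -> G W = 0.
  move=> W p q hW hpq hq e; apply: (H (q - p).-1 W p q) => //; lia.
elim=> [|d IH] W p q -> hW hq e; first by apply: (hadj W p) => //; rewrite addn1 in e hq.
have hs : G (swap W (p + d.+1)%N (p + d.+2)%N) = - G W.
  apply: (@swap_lemma r G) => //; try lia.
  by move=> V hV eV; apply: (hadj V (p + d.+1)%N) => //; [lia|rewrite eV addnS].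
have : G (swap W (p + d.+1)%N (p + d.+2)%N) = 0.
  apply: (IH _ p (p + d.+1)%N) => //; first (by apply: good_swap => //; lia); first lia.
  rewrite /swap /=; have -> : (p == p + d.+1)%N = false by apply/eqP; lia.
  have -> : (p == p + d.+2)%N = false by apply/eqP; lia.
  by rewrite eqxx.
by rewrite hs => /eqP; rewrite oppr_eq0 => /eqP.
Qed.

Section Om.
Variables (n : nat) (om : Lmap A n).
Hypothesis hom : inOmega om.

Definition omN (U : nat -> F) : A := om (fun l : 'I_n => U (val l)) 1.

Lemma goodT U : good n U -> forall i : 'I_n, D (U i).
Proof. by move=> hU i; apply: hU. Qed.

Lemma omN_fun U : good n U -> om (fun l : 'I_n => U l) = mulop (omN U).
Proof.
move=> hU; have [_ [hv _]] := hom; case: (hv _ (goodT hU)) => c hc.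
by rewrite /omN hc /mulop mulr1.
Qed.

Lemma omN_ext U V : (forall m, (m < n)%N -> U m = V m) -> omN U = omN V.
Proof.
move=> h; rewrite /omN; congr (om _ _); apply: functional_extensionality => l.
exact: h (ltn_ord l).
Qed.

Lemma upd_tuple U p (hp : (p < n)%N) v :
  (fun l : 'I_n => upd U p v l) = (fun j => if j == Ordinal hp then v else (fun l : 'I_n => U l) j).
Proof. by apply: functional_extensionality => j. Qed.

Lemma omN_lin : mlin n omN.
Proof.
move=> U p c x y hU hp Dx Dy; have [[_ [hml _]] _] := hom.
rewrite /omN !(upd_tuple _ hp).
have e := hml (fun l : 'I_n => U l) (Ordinal hp) x y c (goodT hU) Dx Dy.
by rewrite /lc e.
Qed.

Lemma omN_alt U p q : good n U -> (p < q)%N -> (q < n)%N -> U p = U q -> omN U = 0.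
Proof.
move=> hU hpq hq e; have [[_ [_ hal]] _] := hom.
have hp : (p < n)%N by lia.
have := hal (fun l : 'I_n => U l) (Ordinal hp) (Ordinal hq) (goodT hU).
rewrite /omN => -> //; rewrite -val_eqE /=; lia.
Qed.

Lemma omN_alt2 U p q : good n U -> (p < n)%N -> (q < n)%N -> p != q -> U p = U q -> omN U = 0.
Proof.
move=> hU hp hq; rewrite neq_ltn => /orP[] h e; first exact: (omN_alt hU h).
exact: (omN_alt hU h hp (esym e)).
Qed.

Lemma omN_vanish U p : good n U -> (p < n)%N -> isMult (U p) -> omN U = 0.
Proof.
move=> hU hp hm; have [_ [_ [hz _]]] := hom.
by rewrite /omN (hz _ (goodT hU)) //; exists (Ordinal hp).
Qed.

Lemma omN_Alin0 U a : (forall m, (m < n)%N -> isDer (U m)) -> (0 < n)%N ->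
  omN (upd U 0 (fun b => a * U 0%N b)) = a * omN U.
Proof.
move=> hU hn; have [_ [_ [_ hA]]] := hom.
have e := hA (fun l : 'I_n => U l) a (fun i => hU _ (ltn_ord i)) (Ordinal hn) erefl.
rewrite /omN -[RHS]/((fun b => a * om (fun l : 'I_n => U l) b) 1) -e.
congr (om _ _); apply: functional_extensionality => j.
rewrite /upd -val_eqE /=; by case: eqP => // ->.
Qed.

Lemma omN_swap U p q : good n U -> (p < n)%N -> (q < n)%N -> p != q ->
  omN (swap U p q) = - omN U.
Proof.
move=> hU hp hq npq; apply: (@swap_lemma n omN) => //; first exact: omN_lin.
by move=> W hW e; apply: (omN_alt2 hW hp hq npq).
Qed.

Lemma omN_Alin U p a : (forall m, (m < n)%N -> isDer (U m)) -> (p < n)%N ->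
  omN (upd U p (fun b => a * U p b)) = a * omN U.
Proof.
move=> hU hp; case: (eqVneq p 0%N) => [->|np0]; first by apply: omN_Alin0 => //; lia.
have hgU : good n U by move=> m hm; apply: DerD; apply: hU.
have hn : (0 < n)%N by lia.
have np0' : (0 != p)%N by rewrite eq_sym.
rewrite -[LHS]opprK -(@omN_swap (upd U p (fun b => a * U p b)) 0 p) //; last by apply: good_upd => //; apply: DerD; apply: Der_mul; apply: hU.
have -> : swap (upd U p (fun b => a * U p b)) 0 p = upd (swap U 0 p) 0 (fun b => a * (swap U 0 p) 0%N b).
  apply: functional_extensionality => m; rewrite /swap /upd /=; rewrite eqxx (negbTE np0').
  by case: (eqVneq m 0%N) => // _; case: (m == p).
rewrite omN_Alin0 //; last first.
  by move=> m hm; rewrite /swap; case: eqP => _; [apply: hU|case: eqP => _; apply: hU].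
by rewrite omN_swap // mulrN opprK.
Qed.

Definition W (U : nat -> F) (i j : nat) : nat -> F :=
  fun l => if l == 0%N then com (U i) (U j) else U (bump i (bump j.-1 l.-1)).

Definition Dg (U : nat -> F) : A :=
  \sum_(k < n.+1) (-1) ^+ k * dl (U k) (omN (U \o bump k))
  + \sum_(i < n.+1) \sum_(j < n.+1 | (i < j)%N) (-1) ^+ (i + j)%N * omN (W U i j).

Lemma good_bump U k : good n.+1 U -> (k < n.+1)%N -> good n (U \o bump k).
Proof. move=> hU hk m hm /=; apply: hU; rewrite /bump; lia. Qed.

Lemma good_W U i j : good n.+1 U -> (i < j)%N -> (j < n.+1)%N -> good n (W U i j).
Proof.
move=> hU hij hj m hm; rewrite /W; case: eqP => hm0.
  by apply: D_com; apply: hU; lia.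
apply: hU; rewrite /bump; lia.
Qed.

Lemma dl_lc c x y f : dl (lc c x y) f = c *: dl x f + dl y f.
Proof. by rewrite /dl /lc mulrDr -scalerAr scalerBr opprD addrACA. Qed.

Lemma dl_lin2 (p : F) c f g : Klinear p -> dl p (c *: f + g) = c *: dl p f + dl p g.
Proof. by move=> hp; rewrite /dl hp mulrDl -scalerAl scalerBr opprD addrACA. Qed.

Lemma com_lcl (q : F) c x y : Klinear q -> com (lc c x y) q = lc c (com x q) (com y q).
Proof.
move=> hq; apply: functional_extensionality => b.
by rewrite /com /lc hq scalerBr opprD addrACA.
Qed.

Lemma com_lcr (p : F) c x y : Klinear p -> com p (lc c x y) = lc c (com p x) (com p y).
Proof.
move=> hp; apply: functional_extensionality => b.
by rewrite /com /lc hp scalerBr opprD addrACA.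
Qed.


Lemma upd_bump_eq U p v k : k = p -> upd U p v \o bump k = U \o bump k.
Proof.
move=> ekp; apply: functional_extensionality => l; rewrite /upd /=.
by have -> : (bump k l == p) = false by apply/eqP; rewrite /bump; lia.
Qed.

Lemma upd_bump_neq U p v k : k != p -> upd U p v \o bump k = upd (U \o bump k) (unbump k p) v.
Proof.
move=> /eqP nkp; apply: functional_extensionality => l; rewrite /upd /=.
congr (if _ then _ else _); apply/eqP/eqP; rewrite /bump /unbump; lia.
Qed.

Lemma W_upd_i U p v i j : i = p -> (i < j)%N ->
  W (upd U p v) i j = upd (W U i j) 0 (com v (U j)).
Proof.
move=> eip hij; apply: functional_extensionality => l; rewrite /W /upd.
have -> : (i == p) = true by apply/eqP.
have -> : (j == p) = false by apply/eqP; lia.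
case: (eqVneq l 0%N) => // nl.
by have -> : (bump i (bump j.-1 l.-1) == p) = false by apply/eqP; rewrite /bump; lia.
Qed.

Lemma W_upd_j U p v i j : j = p -> (i < j)%N ->
  W (upd U p v) i j = upd (W U i j) 0 (com (U i) v).
Proof.
move=> ejp hij; apply: functional_extensionality => l; rewrite /W /upd.
have -> : (j == p) = true by apply/eqP.
have -> : (i == p) = false by apply/eqP; lia.
case: (eqVneq l 0%N) => // nl.
by have -> : (bump i (bump j.-1 l.-1) == p) = false by apply/eqP; rewrite /bump; lia.
Qed.

Definition pW (i j p : nat) := (unbump j.-1 (unbump i p)).+1.

Lemma W_upd_o U p v i j : i != p -> j != p -> (i < j)%N ->
  W (upd U p v) i j = upd (W U i j) (pW i j p) v.
Proof.
move=> nip njp hij; apply: functional_extensionality => l; rewrite /W /upd.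
rewrite (negbTE nip) (negbTE njp).
case: (eqVneq l 0%N) => [->|nl] //.
move/eqP: nip => nip; move/eqP: njp => njp; move/eqP: nl => nl.
congr (if _ then _ else _); apply/eqP/eqP; rewrite /pW /bump /unbump; lia.
Qed.

Lemma pW_lt i j p : (i < j)%N -> (j < n.+1)%N -> (p < n.+1)%N -> i != p -> j != p ->
  (pW i j p < n)%N.
Proof. move=> hij hj hp /eqP nip /eqP njp; rewrite /pW /unbump; lia. Qed.

Lemma Dg_lin : mlin n.+1 Dg.
Proof.
move=> U p c x y hU hp Dx Dy.
rewrite /Dg scalerDr addrACA; congr (_ + _).
  rewrite scaler_sumr -big_split; apply: eq_bigr => k _ /=.
  case: (eqVneq (k : nat) p) => [ekp|nkp].
    rewrite !(@upd_bump_eq U p _ k ekp) /upd ekp eqxx dl_lc.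
    by rewrite mulrDr scalerAr.
  have hk : (unbump k p < n)%N by move/eqP: nkp => nkp; have := ltn_ord k; rewrite /unbump; lia.
  rewrite !(@upd_bump_neq U p _ k nkp) omN_lin //; last exact: good_bump.
  rewrite /upd (negbTE nkp) dl_lin2; last by case: (hU k (ltn_ord k)).
  by rewrite mulrDr scalerAr.
rewrite scaler_sumr -big_split; apply: eq_bigr => i _.
rewrite scaler_sumr -big_split; apply: eq_bigr => j hij /=.
suff -> : omN (W (upd U p (lc c x y)) i j) = c *: omN (W (upd U p x) i j) + omN (W (upd U p y) i j).
  by rewrite mulrDr scalerAr.
have hj := ltn_ord j; have Di : D (U i) by apply: hU; lia.
have Dj : D (U j) by apply: hU.
have hn0 : (0 < n)%N by lia.
case: (eqVneq (i : nat) p) => [eip|nip].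
  rewrite !(@W_upd_i U p _ i j eip hij) (com_lcl _ _ _ (DiffK Dj)) omN_lin //.
  - by apply: good_W.
  - by apply: D_com.
  - by apply: D_com.
case: (eqVneq (j : nat) p) => [ejp|njp].
  rewrite !(@W_upd_j U p _ i j ejp hij) (com_lcr _ _ _ (DiffK Di)) omN_lin //.
  - by apply: good_W.
  - by apply: D_com.
  - by apply: D_com.
rewrite !(@W_upd_o U p _ i j nip njp hij) omN_lin //; first by apply: good_W.
exact: pW_lt.
Qed.


Lemma bump_unbump k p : k != p -> bump k (unbump k p) = p.
Proof. move/eqP=> h; rewrite /bump /unbump; lia. Qed.

Lemma W_pW U i j p : (i < j)%N -> i != p -> j != p -> W U i j (pW i j p) = U p.
Proof. move=> hij /eqP nip /eqP njp; rewrite /W /pW /=; congr (U _); rewrite /bump /unbump; lia. Qed.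

Lemma dl0 (q : F) : D q -> dl q 0 = 0.
Proof. by move=> hq; rewrite /dl (Klin0 (DiffK hq)) mul0r subrr. Qed.

Lemma Dg_vanish U p : good n.+1 U -> (p < n.+1)%N -> isMult (U p) -> Dg U = 0.
Proof.
move=> hU hp hm.
rewrite /Dg big1 ?add0r; last first.
  move=> k _; case: (eqVneq (k : nat) p) => [->|nkp].
    by case: hm => c ->; rewrite /dl /mulop mulr1 [X in _ - X]mulrC subrr mulr0.
  rewrite (@omN_vanish _ (unbump k p)) ?dl0 ?mulr0 //.
  - by apply: hU.
  - exact: good_bump.
  - by move/eqP: nkp => nkp; have := ltn_ord k; rewrite /unbump; lia.
  - by rewrite /= bump_unbump.
rewrite big1 // => i _; rewrite big1 // => j hij.
have hj := ltn_ord j; have Dj : D (U j) by apply: hU.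
have Di : D (U i) by apply: hU; lia.
have hg := good_W hU hij hj.
have hn0 : (0 < n)%N by lia.
case: (eqVneq (i : nat) p) => [eip|nip].
  rewrite (@omN_vanish _ 0) ?mulr0 // /W /= eip.
  by case: hm => c ->; apply: com_mulopl.
case: (eqVneq (j : nat) p) => [ejp|njp].
  rewrite (@omN_vanish _ 0) ?mulr0 // /W /= ejp.
  by case: hm => c ->; apply: com_mulopr.
rewrite (@omN_vanish _ (pW i j p)) ?mulr0 //; first exact: pW_lt.
by rewrite W_pW.
Qed.

Lemma sum_two N (g : nat -> A) p q : (p < N)%N -> (q < N)%N -> p != q ->
  (forall k, (k < N)%N -> k != p -> k != q -> g k = 0) ->
  \sum_(k < N) g k = g p + g q.
Proof.
move=> hp hq npq hz.
rewrite (bigD1 (Ordinal hp)) //= (bigD1 (Ordinal hq)) /=; last by rewrite -val_eqE /= eq_sym.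
rewrite big1 ?addr0 // => k /andP[h1 h2]; apply: hz => //.
Qed.


Lemma sign_cancel k (X : A) : (-1) ^+ k * X + (-1) ^+ k.+1 * X = 0.
Proof. by rewrite exprS mulN1r mulNr addrN. Qed.

Lemma bump_adj (U : nat -> F) p m : U p = U p.+1 -> U (bump p m) = U (bump p.+1 m).
Proof.
move=> e; case: (eqVneq m p) => [->|/eqP nmp].
  have -> : bump p p = p.+1 by rewrite /bump; lia.
  by have -> : bump p.+1 p = p by rewrite /bump; lia.
by have -> : bump p m = bump p.+1 m by rewrite /bump; lia.
Qed.

Lemma Tzero U i j p : good n.+1 U -> U p = U p.+1 -> (p.+1 < n.+1)%N -> (i < j)%N -> (j < n.+1)%N ->
  i != p -> i != p.+1 -> j != p -> j != p.+1 -> omN (W U i j) = 0.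
Proof.
move=> hU e hp hij hj nip nip1 njp njp1.
apply: (@omN_alt2 _ (pW i j p) (pW i j p.+1)).
- exact: good_W.
- apply: pW_lt => //; lia.
- apply: pW_lt => //; lia.
- move: nip nip1 njp njp1 => /eqP ? /eqP ? /eqP ? /eqP ?; apply/eqP; rewrite /pW /unbump; lia.
- by rewrite !W_pW.
Qed.

Lemma W_adj_j U i p : U p = U p.+1 -> (i < p)%N -> omN (W U i p) = omN (W U i p.+1).
Proof.
move=> e hip; apply: omN_ext => m hm; rewrite /W; case: eqP => [_|/eqP nm0]; first by rewrite e.
case: (eqVneq m.-1 p.-1) => [em|/eqP nem].
  have -> : bump i (bump p.-1 m.-1) = p.+1 by rewrite /bump; lia.
  by have -> : bump i (bump p.+1.-1 m.-1) = p by rewrite /bump; lia.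
by have -> : bump i (bump p.-1 m.-1) = bump i (bump p.+1.-1 m.-1) by rewrite /bump; lia.
Qed.

Lemma W_adj_i U p j : U p = U p.+1 -> omN (W U p j) = omN (W U p.+1 j).
Proof.
move=> e; apply: omN_ext => m hm; rewrite /W; case: eqP => [_|_]; first by rewrite e.
exact: bump_adj.
Qed.

Lemma Dg_adj U p : good n.+1 U -> (p.+1 < n.+1)%N -> U p = U p.+1 -> Dg U = 0.
Proof.
move=> hU hp e.
rewrite /Dg.
rewrite (@sum_two n.+1 (fun k => (-1) ^+ k * dl (U k) (omN (U \o bump k))) p p.+1) //; first last.
- move=> k hk /eqP nkp /eqP nkp1.
  rewrite (@omN_alt2 _ (unbump k p) (unbump k p.+1)) ?dl0 ?mulr0 //.
  + by apply: hU.
  + exact: good_bump.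
  + rewrite /unbump; lia.
  + rewrite /unbump; lia.
  + apply/eqP; rewrite /unbump; lia.
  + by rewrite /= !bump_unbump //; apply/eqP; lia.
- by rewrite neq_ltn ltnSn.
- lia.
rewrite /= (@omN_ext (U \o bump p) (U \o bump p.+1)); last by move=> m _ /=; apply: bump_adj.
rewrite -e sign_cancel add0r.
rewrite (@sum_two n.+1 (fun i => \sum_(j < n.+1 | (i < j)%N) (-1) ^+ (i + j)%N * omN (W U i j)) p p.+1) //; first last.
- move=> i hi /eqP nip /eqP nip1.
  case: (ltnP i p) => hip.
    rewrite big_mkcond (@sum_two n.+1 (fun j => if (i < j)%N then (-1) ^+ (i + j)%N * omN (W U i j) else 0) p p.+1) //; first last.
    + move=> j hj njp njp1 /=; case: ifP => // hij.
      by rewrite (@Tzero U i j p) ?mulr0 //; apply/eqP => //; lia.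
    + by rewrite neq_ltn ltnSn.
    + lia.
    rewrite /= hip (_ : (i < p.+1)%N) ?(W_adj_j e hip) ?addnS ?sign_cancel //; lia.
  rewrite big1 // => j hij; rewrite (@Tzero U i j p) ?mulr0 //; apply/eqP; lia.
- by rewrite neq_ltn ltnSn.
- lia.
rewrite /= [X in X + _]big_mkcond [X in _ + X]big_mkcond -big_split big1 // => j _ /=.
case: (ltngtP j p.+1) => hj.
- by rewrite addr0.
- rewrite (W_adj_i _ e); match goal with |- context [(-1) ^+ ?x * _ + (-1) ^+ ?y * _] => have -> : y = x.+1 by rewrite /= addSn end.
  exact: sign_cancel.
- rewrite addr0 (@omN_vanish _ 0) ?mulr0 //.
  + by apply: good_W; rewrite ?hj ?ltnSn.
  + lia.
  + rewrite /W /= hj -e; exists 0; apply: functional_extensionality => b.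
    by rewrite /com /mulop subrr mul0r.
Qed.


Lemma Dg_alt U p q : good n.+1 U -> (p < q)%N -> (q < n.+1)%N -> U p = U q -> Dg U = 0.
Proof.
move=> hU hpq hq e; apply: (@alt_of_adj n.+1 Dg Dg_lin _ U p q) => //.
by move=> V r hV hr eV; apply: (Dg_adj hV hr eV).
Qed.

Lemma dl_der_mul (X : F) a f : isDer X -> dl X (a * f) = a * dl X f + X a * f.
Proof. by move=> hX; rewrite !dl_der //; case: hX => _ ->. Qed.

Lemma Wder U i j : (forall m, (m < n.+1)%N -> isDer (U m)) -> (i < j)%N -> (j < n.+1)%N ->
  forall m, (m < n)%N -> isDer (W U i j m).
Proof.
move=> hD hij hj m hm; rewrite /W; case: eqP => hm0.
  by apply: Der_com; apply: hD; lia.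
apply: hD; rewrite /bump; lia.
Qed.

Lemma sum_pos (G : nat -> A) : \sum_(j < n.+1 | (0 < j)%N) G j = \sum_(j < n) G j.+1.
Proof. by rewrite big_mkcond big_ord_recl /= add0r. Qed.

Lemma com_amul (Y X : F) a : isDer X ->
  com (fun b => a * Y b) X = lc 1 (fun b => a * com Y X b) (fun b => (- X a) * Y b).
Proof.
case=> _ hX; apply: functional_extensionality => b.
rewrite /com /lc scale1r hX; ring.
Qed.

Lemma Dg_Alin U a : (forall m, (m < n.+1)%N -> isDer (U m)) ->
  Dg (upd U 0 (fun b => a * U 0%N b)) = a * Dg U.
Proof.
move=> hD.
have hgU : good n.+1 U by move=> m hm; apply: DerD; apply: hD.
set U' := upd U 0 (fun b => a * U 0%N b).
pose e k := (-1) ^+ k * (U k a * omN (U \o bump k)).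
have E1 : \sum_(k < n.+1) (-1) ^+ k * dl (U' k) (omN (U' \o bump k)) =
  a * \sum_(k < n.+1) (-1) ^+ k * dl (U k) (omN (U \o bump k)) + \sum_(k < n) e k.+1.
  rewrite [LHS]big_ord_recl (big_ord_recl n (fun k : 'I_n.+1 => (-1) ^+ k * dl (U k) (omN (U \o bump k)))).
  rewrite [in RHS]mulrDr -addrA; congr (_ + _).
    rewrite /U' (@upd_bump_eq U 0 _ 0) //= /upd /= dl_der; last by apply: Der_mul; apply: hD.
    rewrite dl_der; last by apply: hD.
    by rewrite mulrCA.
  rewrite mulr_sumr -big_split; apply: eq_bigr => i _ /=.
  rewrite /U' (@upd_bump_neq U 0 _ i.+1) //= /upd /=.
  have -> : unbump i.+1 0 = 0%N by [].
  have -> : (fun b => a * U 0%N b) = (fun b => a * (U \o bump i.+1) 0%N b) by [].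
  rewrite omN_Alin0; first last.
  - by case: (i) => [i' hi'] /=; lia.
  - move=> m hm /=; apply: hD; rewrite /bump; lia.
  rewrite dl_der_mul; last by apply: hD; have := ltn_ord i; rewrite /bump; lia.
  by rewrite /e mulrDr mulrCA.
have E2 : \sum_(i < n.+1) \sum_(j < n.+1 | (i < j)%N) (-1) ^+ (i + j)%N * omN (W U' i j) =
  a * \sum_(i < n.+1) \sum_(j < n.+1 | (i < j)%N) (-1) ^+ (i + j)%N * omN (W U i j) - \sum_(k < n) e k.+1.
  rewrite [LHS]big_ord_recl (big_ord_recl n (fun i : 'I_n.+1 => \sum_(j < n.+1 | (i < j)%N) (-1) ^+ (i + j)%N * omN (W U i j))).
  rewrite [in RHS]mulrDr addrAC; congr (_ + _).
    rewrite /= (sum_pos (fun j => (-1) ^+ (0 + j)%N * omN (W U' 0 j))).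
    rewrite (sum_pos (fun j => (-1) ^+ (0 + j)%N * omN (W U 0 j))).
    rewrite mulr_sumr -sumrB; apply: eq_bigr => j _.
    have hj := ltn_ord j.
    have DU0 := hD 0%N (ltn0Sn n); have DUj : isDer (U j.+1) by apply: hD.
    have hg : good n (W U 0 j.+1) by apply: good_W.
    have hn0 : (0 < n)%N by lia.
    rewrite /U' (@W_upd_i U 0 _ 0 j.+1) // (com_amul _ _ DUj).
    rewrite omN_lin //; first last.
    - by apply: DerD; apply: Der_mul.
    - by apply: DerD; apply: Der_mul; apply: Der_com.
    rewrite omN_Alin0 //; last by apply: Wder.
    rewrite -(upd_upd (W U 0 j.+1) 0 (U 0%N)) omN_Alin0 //; first last.
      move=> m hm; rewrite /upd; case: eqP => // _; exact: Wder.
    rewrite (@omN_ext (upd (W U 0 j.+1) 0 (U 0%N)) (U \o bump j.+1)); last first.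
      move=> m hm; rewrite /upd /W /=; case: eqP => [->|/eqP hm0] //.
      by congr (U _); rewrite /bump; lia.
    by rewrite /e scale1r add0n; ring.
  rewrite mulr_sumr; apply: eq_bigr => i _; rewrite mulr_sumr; apply: eq_bigr => j hij /=.
  have hj := ltn_ord j.
  rewrite /U' (@W_upd_o U 0 _ i.+1 j) //; last by apply/eqP; lia.
  have -> : (fun b => a * U 0%N b) = (fun b => a * W U i.+1 j (pW i.+1 j 0) b).
    by rewrite W_pW //; apply/eqP; lia.
  rewrite omN_Alin; first by rewrite mulrCA.
  - by apply: Wder.
  - by apply: pW_lt => //; apply/eqP; lia.
rewrite /Dg E1 E2 mulrDr addrACA subrr addr0 //.
Qed.

End Om.
End Work.

Section Main.
Variables (K : fieldType) (A : comAlgType K).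
Local Notation F := (A -> A).
Local Notation D := (@isDiff1 K A).

Lemma ext_val p (u : 'I_p -> F) (i : 'I_p) : ext u i = u i.
Proof. by rewrite /ext valK. Qed.

Lemma ext_lt p (u : 'I_p -> F) m (hm : (m < p)%N) : ext u m = u (Ordinal hm).
Proof. by rewrite /ext insubT. Qed.

Lemma ext_ge p (u : 'I_p -> F) m : (p <= m)%N -> ext u m = (fun _ => 0).
Proof. by move=> hm; rewrite /ext insubF // ltnNge hm. Qed.

Lemma ext_perm p (u : 'I_p -> F) (s : 'S_p) m (hm : (m < p)%N) :
  ext (u \o s) m = ext u (s (Ordinal hm)).
Proof. by rewrite ext_lt ext_val. Qed.

Lemma good_ext p (u : 'I_p -> F) : (forall i, D (u i)) -> good p (ext u).
Proof. by move=> hu m hm; rewrite ext_lt. Qed.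

Lemma sign1 n k : ((-1) ^+ ((2 + 1) * n)%N * (-1) ^+ (odd n (+) odd k) = (-1) ^+ k :> A).
Proof.
rewrite signr_addb !signr_odd mulrA -exprD.
have -> : ((2 + 1) * n + n = (2 * n).*2)%N by lia.
by rewrite -mul2n mulnC exprM sqrr_sign mul1r.
Qed.

Lemma sign2 (i j : nat) : (0 < j)%N -> ((-1) ^+ (odd i (+) odd j.-1) = - (-1) ^+ (i + j)%N :> A).
Proof.
move=> hj; rewrite signr_addb !signr_odd -exprD.
have -> : (i + j = (i + j.-1).+1)%N by lia.
by rewrite exprS mulN1r opprK.
Qed.

Variables (n : nat) (om : Lmap A n).
Hypothesis hom : inOmega om.

Lemma P1 (u : 'I_n.+1 -> F) (hu : forall i, D (u i)) (a : A) :
  (-1) ^+ ((2 + 1) * n)%N * Defs.comp (@mu K A) om u a =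
  - ((\sum_(k < n.+1) (-1) ^+ k * dl (ext u k) (omN om (ext u \o bump k))) * a).
Proof.
have hg := good_ext hu.
rewrite /Defs.comp /= (shuffle1_sum (N := n)) mulr_sumr mulr_suml -sumrN; apply: eq_bigr => k _.
rewrite c1_odd mulrA sign1 /mu /=.
have -> : (fun l : 'I_n => ext (u \o c1 k) l) = (fun l : 'I_n => (ext u \o bump k) l).
  apply: functional_extensionality => l.
  have hl : (l < n.+1)%N by have := ltn_ord l; lia.
  by rewrite (ext_perm _ _ hl) /= c1_valn //=; apply: ltn_ord.
rewrite (omN_fun hom); last exact: good_bump.
rewrite addn0 (ext_perm _ _ (ltnSn n)) (_ : Ordinal (ltnSn n) = ord_max); last by apply: val_inj.
rewrite c1_max ext_val /mulop (DiffE (hu k)).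
by rewrite opprD addrA subrr add0r mulrN mulrA.
Qed.

Lemma ext_c2 N (w : 'I_N.+2 -> F) (i j : 'I_N.+2) m (hij : (i < j)%N) (hm : (m < N.+2)%N) :
  ext (w \o c2 i j) m = ext w (if m == 0%N then (i : nat) else if m == 1%N then (j : nat)
                               else bump i (bump j.-1 (m - 2))).
Proof. by rewrite (ext_perm _ _ hm) c2_val. Qed.

Lemma P2gen n' (om' : Lmap A n'.+1) (hom' : inOmega om') M (hM : M = n'.+2) (w : 'I_M -> F)
  (hw : forall i, D (w i)) (a : A) :
  \sum_(s : 'S_M | shuffle 2 s) (-1) ^+ odd_perm s *
     om' (fun k : 'I_n'.+1 => if val k == 0%N then (@mu K A) (fun l : 'I_2 => ext (w \o s) l)
                             else ext (w \o s) (2 + k.-1)) a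
  = - ((\sum_(i < n'.+2) \sum_(j < n'.+2 | (i < j)%N) (-1) ^+ (i + j)%N * omN om' (W (ext w) i j)) * a).
Proof.
subst M; have hg := good_ext hw.
rewrite (shuffle2_sum (N := n')) mulr_suml -sumrN; apply: eq_bigr => i _.
rewrite mulr_suml -sumrN; apply: eq_bigr => j hij.
have hj0 : (0 < j)%N by lia.
rewrite c2_odd // sign2 //.
have -> : (fun k : 'I_n'.+1 => if val k == 0%N then (@mu K A) (fun l : 'I_2 => ext (w \o c2 i j) l)
                             else ext (w \o c2 i j) (2 + k.-1)) = (fun k : 'I_n'.+1 => W (ext w) i j k).
  apply: functional_extensionality => k; rewrite /W /=.
  case: (eqVneq (k : nat) 0%N) => hk0.
    apply: functional_extensionality => b; rewrite /mu /com /= !ext_c2 //.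
  have hk := ltn_ord k.
  rewrite ext_c2 //; last by lia.
  have -> : (2 + k.-1 == 0)%N = false by apply/eqP; lia.
  have -> : (2 + k.-1 == 1)%N = false by apply/eqP; lia.
  by have -> : (2 + k.-1 - 2 = k.-1)%N by lia.
rewrite (omN_fun hom'); last by apply: good_W.
by rewrite /mulop mulNr mulrA.
Qed.

Lemma P2 n' (om' : Lmap A n'.+1) (hom' : inOmega om') (w : 'I_((n'.+1 + 2).-1) -> F)
  (hw : forall i, D (w i)) (a : A) :
  Defs.comp om' (@mu K A) w a
  = - ((\sum_(i < n'.+2) \sum_(j < n'.+2 | (i < j)%N) (-1) ^+ (i + j)%N * omN om' (W (ext w) i j)) * a).
Proof. rewrite /Defs.comp. apply: (P2gen hom' _ hw). lia. Qed.
End Main.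

Section Final.
Variables (K : fieldType) (A : comAlgType K).
Local Notation F := (A -> A).
Local Notation D := (@isDiff1 K A).

Lemma ext_cast p q (e : p = q) (u : 'I_q -> F) :
  ext (fun k : 'I_p => u (cast_ord e k)) = ext u.
Proof.
apply: functional_extensionality => m; case: (ltnP m p) => hm.
  have hm' : (m < q)%N by rewrite -e.
  by rewrite !(ext_lt _ hm) (ext_lt _ hm'); congr (u _); apply: val_inj.
by rewrite !ext_ge // -e.
Qed.

Lemma ext_upd p (u : 'I_p -> F) (i : 'I_p) v :
  ext (fun j => if j == i then v else u j) = upd (ext u) i v.
Proof.
apply: functional_extensionality => m; rewrite /upd; case: (ltnP m p) => hm.
  by rewrite !(ext_lt _ hm).
rewrite !ext_ge //; have hi := ltn_ord i; case: eqP => // em; lia.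
Qed.

Lemma eval_bracket n (om : Lmap A n) (hom : inOmega om) (hn : (0 < n)%N)
  (u : 'I_n.+1 -> F) (hu : forall i, D (u i)) :
  bracket (@mu K A) om u = mulop (- Dg om (ext u)).
Proof.
case: n om hom hn u hu => [//|n'] om hom _ u hu.
apply: functional_extensionality => a.
rewrite /bracket (P1 hom hu) (P2 hom); last by move=> i; apply: hu.
rewrite ext_cast.
rewrite (_ : (-1) ^+ 2 = 1 :> A); last by rewrite expr2 mulrNN mulr1.
by rewrite mul1r /mulop /Dg mulNr mulrDl opprD.
Qed.

Lemma ext_inord n (X : 'I_n.+1 -> F) m : (m < n.+1)%N -> ext X m = X (inord m).
Proof. by move=> hm; rewrite (ext_lt _ hm); congr (X _); apply: val_inj; rewrite /= inordK. Qed.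

Lemma dOmega_Dg n (om : Lmap A n) (X : 'I_n.+1 -> F) : (forall i, isDer (X i)) ->
  dOmega om X = Dg om (ext X).
Proof.
move=> hX; rewrite /dOmega /Dg; congr (_ + _).
  apply: eq_bigr => k _; rewrite ext_val dl_der //; congr (_ * X k _).
  rewrite /omN; congr (om _ _); apply: functional_extensionality => l /=.
  by rewrite ext_inord //; have := ltn_ord l; rewrite /bump; lia.
apply: eq_bigr => i _; apply: eq_bigr => j hij; congr (_ * _).
rewrite /omN; congr (om _ _); apply: functional_extensionality => k /=; rewrite /W /=.
case: eqP => hk0; first by rewrite !ext_val.
rewrite ext_inord //; have := ltn_ord k; have := ltn_ord j; rewrite /bump; lia.
Qed.

Lemma B_ml n (om : Lmap A n) (hom : inOmega om) (hn : (0 < n)%N) :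
  inOmega (n := n.+1) (bracket (@mu K A) om).
Proof.
have EV := eval_bracket hom hn.
split; [split; [|split]|split; [|split]].
- by move=> u hu; rewrite EV //; apply: D_mulop.
- move=> u i x y c hu Dx Dy.
  have hux : forall j, D ((fun j => if j == i then x else u j) j) by move=> j; case: eqP.
  have huy : forall j, D ((fun j => if j == i then y else u j) j) by move=> j; case: eqP.
  have hus : forall j, D ((fun j => if j == i then (fun b => c *: x b + y b) else u j) j).
    by move=> j; case: eqP => _ //; apply: D_comb.
  rewrite !EV // !ext_upd.
  have := Dg_lin hom c (good_ext hu) (ltn_ord i) Dx Dy; rewrite /lc => ->.
  apply: functional_extensionality => b.
  by rewrite /mulop opprD mulrDl -scalerN scalerAl.
- move=> u i j hu nij e; rewrite EV //.
  have hg := good_ext hu.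
  have e' : ext u i = ext u j by rewrite !ext_val.
  have -> : Dg om (ext u) = 0.
    case: (ltngtP i j) => hij.
    + exact: (Dg_alt hom hg hij (ltn_ord j) e').
    + exact: (Dg_alt hom hg hij (ltn_ord i) (esym e')).
    + by move: nij; rewrite (val_inj hij) eqxx.
  by apply: functional_extensionality => b; rewrite /mulop oppr0 mul0r.
- by move=> u hu; rewrite EV //; exists (- Dg om (ext u)).
- move=> u hu [i hi]; rewrite EV //.
  rewrite (Dg_vanish hom (good_ext hu) (ltn_ord i)); last by rewrite ext_val.
  by apply: functional_extensionality => b; rewrite /mulop oppr0 mul0r.
- move=> u a hu i0 hi0.
  have hD : forall j, D (u j) by move=> j; apply: DerD.
  have hu' : forall j, D ((fun j => if j == i0 then (fun b => a * u j b) else u j) j).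
    by move=> j; case: eqP => _; [apply: DerD; apply: Der_mul|].
  rewrite !EV //.
  have -> : (fun j => if j == i0 then (fun b => a * u j b) else u j) =
            (fun j => if j == i0 then (fun b => a * ext u 0%N b) else u j).
    apply: functional_extensionality => j; case: eqP => // ->.
    by rewrite -hi0 ext_val.
  rewrite ext_upd hi0 (Dg_Alin hom).
    by apply: functional_extensionality => b; rewrite /mulop mulNr mulNr mulrN mulrA.
  by move=> m hm; rewrite (ext_lt _ hm).
Qed.

End Final.

Lemma claim_all (K : fieldType) : claim K.
Proof.
move=> A n om hn hom; split; first exact: B_ml.
move=> X hX; rewrite (eval_bracket hom hn) ?dOmega_Dg //.
by move=> i; apply: DerD.
Qed.

Theorem theorem1 (R : realType) : claim R /\ claim R[i].
Proof. by split; apply: claim_all. Qed.
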